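(* Let $R$ be a field, and let $\ell,\ell'\in R[x]$ be of degree $1$; write $\ell'=r\ell-s$ with $r\in R^{*}$ and $s\in R$. Then $\ell'\sim\ell$ if and only if exactly one of the following holds: (1) $r=1$ and $s=0$ (i.e. $\ell'=\ell$); or (2) $r\neq1$, $s\neq0$, and $\frac{s}{r-1}$ has infinite multiplicative order in $R^{*}$.
   Context: For a ring $S$ and $\ell,\ell'\in S$, $\ell$ and $\ell'$ are called 1-connected, written $\ell\sim\ell'$, if for all positive integers $m,n$ such that $(\ell-\ell')\mid(\ell^m-(\ell')^n)$ we must have $m=n$. $R[x]$ is the polynomial ring in one indeterminate over the field $R$. *)

(* Defs.v *)
From HB Require Import structures.
From mathcomp Require Import all_boot all_order all_algebra.
Set Implicit Arguments. Unset Strict Implicit. Unset Printing Implicit Defensive.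
Import GRing.Theory.
Local Open Scope ring_scope.

Definition rdvd (S : comRingType) (a b : S) : Prop := exists q : S, b = q * a.

Definition one_connected (S : comRingType) (l l' : S) : Prop :=
  forall m n : nat, (0 < m)%N -> (0 < n)%N ->
    rdvd (l - l') (l ^+ m - l' ^+ n) -> m = n.

Definition infinite_mult_order (R : unitRingType) (x : R) : Prop :=
  x \is a GRing.unit /\ forall n : nat, (0 < n)%N -> x ^+ n != 1.

(* Main.v *)
Require Import Defs.
From HB Require Import structures.
From mathcomp Require Import all_boot all_order all_algebra.
Import GRing.Theory.
Local Open Scope ring_scope.

Lemma size2_root (R : fieldType) (p : {poly R}) : size p = 2%N -> exists a, root p a.
Proof.
move=> sp; have nz : p`_1 != 0.
  have := lead_coef_eq0 p; rewrite /lead_coef sp /= => ->.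
  by rewrite -size_poly_eq0 sp.
exists (- p`_0 / p`_1); apply/rootP.
rewrite horner_coef sp !big_ord_recr big_ord0 /= add0r expr0 mulr1 expr1.
by rewrite mulrCA mulfV // mulr1 subrr.
Qed.

Lemma rdvd_root (R : fieldType) (d q : {poly R}) (a : R) :
  size d = 2%N -> root d a -> (rdvd d q <-> root q a).
Proof.
move=> sd ra.
have e : ('X - a%:P) %= d.
  by rewrite -dvdp_size_eqp ?dvdp_XsubCl // size_XsubC sd.
rewrite -dvdp_XsubCl (eqp_dvdl _ e); split.
  by case=> q' ->; apply/dvdpP; exists q'.
by move/dvdpP=> [q' ->]; exists q'.
Qed.

Theorem lemma2p7 (R : fieldType) (l l' : {poly R}) (r s : R) :
  size l = 2%N -> size l' = 2%N -> r != 0 ->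
  l' = r *: l - s%:P ->
  (one_connected l' l <->
    (((r = 1 /\ s = 0) /\ ~ (r != 1 /\ s != 0 /\ infinite_mult_order (s / (r - 1))))
     \/ (~ (r = 1 /\ s = 0) /\ (r != 1 /\ s != 0 /\ infinite_mult_order (s / (r - 1)))))).
Proof.
move=> sl sl' r0 el'.
have [r1|r1] := eqVneq r 1.
  subst r; rewrite scale1r in el'.
  have [s0|s0] := eqVneq s 0.
    subst s; rewrite subr0 in el'; subst l'.
    split=> [_|_]; last first.
      move=> m n m0 n0 [q]; rewrite subrr mulr0 => /eqP; rewrite subr_eq0 => /eqP e.
      have := size_exp l m; have := size_exp l n; rewrite e sl /= !mul1n => -> //.
    by left; split=> // -[].
  split=> [H|]; last by case=> [[[_ e] _]|[_ [h _]]]; [move: s0; rewrite e eqxx | by move/eqP: h].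
  suff: (1 = 2)%N by []. apply: H => //.
  exists ((l' ^+ 1 - l ^+ 2) * (- s^-1)%:P).
  have -> : l' - l = - s%:P by rewrite el' addrAC subrr add0r.
  by rewrite -mulrA -polyCN -polyCM mulrNN mulVf // mulr1.
have r10 : r - 1 != 0 by rewrite subr_eq0.
set d := l' - l.
have ed : d = (r - 1) *: l - s%:P by rewrite /d el' scalerBl scale1r addrAC.
have sd : size d = 2%N.
  rewrite ed size_polyDl size_scale ?sl //.
  by rewrite size_polyN (leq_ltn_trans (size_polyC_leq1 s)) // size_scale ?sl.
have [a ra] := @size2_root _ _ sd.
have da' : (r - 1) * l.[a] = s.
  by apply/eqP; rewrite -subr_eq0; move/rootP: (ra); rewrite -/d ed !hornerE => ->.
have la : l'.[a] = l.[a] by apply/eqP; rewrite -subr_eq0; move/rootP: (ra); rewrite /d !hornerE => ->.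
have da := ra.
set c := l.[a] in da' la.
have ec : c = s / (r - 1) by rewrite -da' mulrC mulKf.
rewrite -ec.
have key : one_connected l' l <-> (forall m n, (0 < m)%N -> (0 < n)%N -> c ^+ m = c ^+ n -> m = n).
  split=> H m n m0 n0 h; apply: H => //.
    by apply/(@rdvd_root _ _ _ _ sd da); rewrite /root !(hornerE, horner_exp) la h subrr.
  by move/(@rdvd_root _ _ _ _ sd da): h; rewrite /root !(hornerE, horner_exp) la subr_eq0 => /eqP.
apply: (iff_trans key).
have [s0|s0] := eqVneq s 0.
  split=> [H|]; last by case=> [[[e _] _]|[_ [_ [h _]]]]; [move: r1; rewrite e eqxx | move: h; rewrite ?s0 ?eqxx].
  suff: (1 = 2)%N by []. by apply: H => //; rewrite ec s0 mul0r !expr0n.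
have c0 : c != 0 by rewrite ec mulf_neq0 ?invr_eq0.
split=> [H|]; last first.
  case=> [[[e _] _]|[_ [_ [_ [_ inf]]]]]; first by move: r1; rewrite e eqxx.
  move=> m n m0 n0 e.
  have [mn|nm|//] := ltngtP m n.
    have := inf (n - m)%N; rewrite subn_gt0 mn => /(_ isT); apply: contraNeq => _.
    apply/eqP; apply: (mulfI (expf_neq0 m c0)); rewrite -exprD subnKC ?(ltnW mn) //.
    by rewrite mulr1 e.
  have := inf (m - n)%N; rewrite subn_gt0 nm => /(_ isT); apply: contraNeq => _.
  apply/eqP; apply: (mulfI (expf_neq0 n c0)); rewrite -exprD subnKC ?(ltnW nm) //.
  by rewrite mulr1 e.
right; split; first by case=> /eqP; rewrite (negbTE r1).
split=> //; split=> //; split; first by rewrite unitfE.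
move=> n n0; apply/eqP=> e.
have := H n.+1 1%N isT isT; rewrite exprS e mulr1 expr1 => /(_ erefl) => /eqP.
by rewrite eqSS => /eqP n0'; rewrite n0' in n0.
Qed.
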